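(* Let $T$ be an ideal hyperbolic triangle in $\mathbb{H}^{2}$, and let $p,q,r$ be the points where the inscribed circle of $T$ touches the sides of $T$. If $h_{0}$ is the length of the greatest horocyclic arc contained in $T$ centered at an ideal vertex of $T$, and $l_{0}$ is the hyperbolic distance between $p$ and $q$, then $l_{0}<h_{0}$. *)

(* Defs.v *)
From Stdlib Require Import Reals Lra.
From Coquelicot Require Import Coquelicot.
Open Scope R_scope.

(* A point of the plane; H^2 = { (x,y) | y > 0 } with metric |dz|/y. *)
Definition pt := (R * R)%type.
Definition inH (z : pt) : Prop := 0 < snd z.

Definition arcosh (t : R) : R := ln (t + sqrt (t ^ 2 - 1)).

Definition hdist (z w : pt) : R :=
  arcosh (1 + ((fst z - fst w) ^ 2 + (snd z - snd w) ^ 2) / (2 * snd z * snd w)).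

(* ideal points: boundary R \cup {oo}; None = oo *)
Definition ideal := option R.

(* defining function of the geodesic joining ideal points u, v:
   semicircle centred on the real axis, or vertical line *)
Definition gfun (u v : ideal) (z : pt) : R :=
  match u, v with
  | Some x, Some y => (fst z - (x + y) / 2) ^ 2 + snd z ^ 2 - ((x - y) / 2) ^ 2
  | Some x, None | None, Some x => fst z - x
  | None, None => 0
  end.

(* sign of the geodesic's defining function at a third ideal point w *)
Definition gval (u v w : ideal) : R :=
  match u, v, w with
  | Some x, Some y, Some t => (t - (x + y) / 2) ^ 2 - ((x - y) / 2) ^ 2
  | Some _, Some _, None => 1
  | Some x, None, Some t | None, Some x, Some t => t - x
  | _, _, _ => 0
  end.

Definition geodesic (u v : ideal) (z : pt) : Prop := inH z /\ gfun u v z = 0.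

Definition halfplane (u v w : ideal) (z : pt) : Prop :=
  inH z /\ 0 <= gfun u v z * gval u v w.

Definition ideal_triangle (a b c : ideal) : Prop := a <> b /\ b <> c /\ a <> c.

Definition triangle (a b c : ideal) (z : pt) : Prop :=
  halfplane b c a z /\ halfplane c a b z /\ halfplane a b c z.

Definition hcircle (o : pt) (rho : R) (z : pt) : Prop := inH z /\ hdist o z = rho.

(* the circle (o, rho) is inscribed in T: contained in T; it touches the side
   geodesic(u,v) at p  iff  p lies on both (a circle inside T meeting a side
   is tangent to it there) *)
Definition inscribed (a b c : ideal) (o : pt) (rho : R) : Prop :=
  inH o /\ 0 < rho /\ (forall z, hcircle o rho z -> triangle a b c z).

Definition touches (o : pt) (rho : R) (u v : ideal) (p : pt) : Prop :=
  hcircle o rho p /\ geodesic u v p.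

(* parametrisation of the horocycle centred at the ideal point v with size s>0:
   centre oo : horizontal line y = s;
   centre a  : Euclidean circle of diameter s tangent to R at a,
               t |-> a + s/(t - i). *)
Definition horo (v : ideal) (s t : R) : pt :=
  match v with
  | None => (t, s)
  | Some a => (a + s * t / (1 + t ^ 2), s / (1 + t ^ 2))
  end.

Definition hspeed (g : R -> pt) (t : R) : R :=
  sqrt ((Derive (fun u => fst (g u)) t) ^ 2 + (Derive (fun u => snd (g u)) t) ^ 2)
  / snd (g t).
Definition hlength (g : R -> pt) (t1 t2 : R) : R := RInt (hspeed g) t1 t2.

Definition horo_arc_in (a b c v : ideal) (s t1 t2 : R) : Prop :=
  (v = a \/ v = b \/ v = c) /\ 0 < s /\ t1 <= t2 /\
  (forall t, t1 <= t <= t2 -> triangle a b c (horo v s t)).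

(* Main.v *)
Require Import Defs.
From Stdlib Require Import Reals.
From Coquelicot Require Import Coquelicot.
Open Scope R_scope.
From Stdlib Require Import Lra.
Import Defs.

Definition tt (z w : pt) : R :=
  1 + ((fst z - fst w) ^ 2 + (snd z - snd w) ^ 2) / (2 * snd z * snd w).

Lemma hdist_tt z w : hdist z w = arcosh (tt z w).
Proof. reflexivity. Qed.

Lemma arcosh_lt s t : 1 <= s -> s < t -> arcosh s < arcosh t.
Proof.
  intros H1 H2. unfold arcosh. apply ln_increasing.
  - pose proof (sqrt_pos (s^2-1)). lra.
  - assert (sqrt (s^2-1) <= sqrt (t^2-1)) by (apply sqrt_le_1_alt; nra). lra.
Qed.

Lemma arcosh_le s t : 1 <= s -> s <= t -> arcosh s <= arcosh t.
Proof.
  intros H1 H2. destruct (Req_dec s t) as [->|Hn]; [lra|].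
  left; apply arcosh_lt; lra.
Qed.

Lemma arcosh_inj s t : 1 <= s -> 1 <= t -> arcosh s = arcosh t -> s = t.
Proof.
  intros H1 H2 H. destruct (Rtotal_order s t) as [h|[h|h]]; auto.
  - pose proof (arcosh_lt s t H1 h); lra.
  - pose proof (arcosh_lt t s H2 h); lra.
Qed.

Lemma arcosh3 : arcosh 3 < 2.
Proof.
  unfold arcosh. rewrite <- (ln_exp 2). apply ln_increasing.
  - pose proof (sqrt_pos (3^2-1)); lra.
  - assert (Hs : sqrt (3^2-1) < 2.83).
    { pose proof (sqrt_pos (3^2-1)). pose proof (sqrt_sqrt (3^2-1)).
      assert (0 <= 3^2-1) by lra. specialize (H0 H1). nra. }
    assert (He : 1 + /4 < exp (/4)) by (apply exp_ineq1; lra).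
    assert (E : exp 2 = exp (/4) ^ 8).
    { replace 2 with (/4+/4+/4+/4+/4+/4+/4+/4) by field.
      rewrite !exp_plus. ring. }
    rewrite E.
    assert (1.25 ^ 8 <= exp (/4) ^ 8).
    { apply pow_incr. lra. }
    assert (1.25 ^ 8 > 5.9) by (simpl; lra). lra.
Qed.

Lemma tt_ge1 z w : 0 < snd z -> 0 < snd w -> 1 <= tt z w.
Proof.
  intros. unfold tt.
  assert (0 <= ((fst z - fst w) ^ 2 + (snd z - snd w) ^ 2) / (2 * snd z * snd w)).
  { apply Rdiv_le_0_compat.
    - pose proof (pow2_ge_0 (fst z - fst w)); pose proof (pow2_ge_0 (snd z - snd w)); lra.
    - apply Rmult_lt_0_compat; [lra| assumption]. } lra.
Qed.

Lemma circle_eq o z C : 0 < snd o -> 0 < snd z -> tt o z = C ->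
  (fst z - fst o)^2 + (snd z - C * snd o)^2 = (C^2-1) * (snd o)^2.
Proof.
  intros Ho Hz H. unfold tt in H.
  assert (E : (fst o - fst z) ^ 2 + (snd o - snd z) ^ 2 = (C - 1) * (2 * snd o * snd z)).
  { rewrite <- H. field. lra. }
  nra.
Qed.

Lemma circle_of o z C : 0 < snd o -> 0 < snd z ->
  (fst z - fst o)^2 + (snd z - C * snd o)^2 = (C^2-1) * (snd o)^2 -> tt o z = C.
Proof.
  intros Ho Hz H. unfold tt.
  assert (E : (fst o - fst z) ^ 2 + (snd o - snd z) ^ 2 = (C - 1) * (2 * snd o * snd z)) by nra.
  rewrite E. field. lra.
Qed.

Lemma gfun_sym u v z : gfun u v z = gfun v u z.
Proof. destruct u, v; unfold gfun. all: try reflexivity. all: field. Qed.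
Lemma gval_sym u v w : gval u v w = gval v u w.
Proof. destruct u, v, w; unfold gval. all: try reflexivity. all: field. Qed.
Lemma halfplane_sym u v w z : halfplane u v w z <-> halfplane v u w z.
Proof. unfold halfplane. rewrite gfun_sym, gval_sym. tauto. Qed.
Lemma tri_swap a b c z : triangle a b c z <-> triangle b a c z.
Proof. unfold triangle. rewrite (halfplane_sym b c), (halfplane_sym c a), (halfplane_sym a b). tauto. Qed.
Lemma tri_rot a b c z : triangle a b c z <-> triangle b c a z.
Proof. unfold triangle. tauto. Qed.

Definition Good (a b c : ideal) : Prop := forall o C, 0 < snd o -> 1 <= C ->
  (forall z, 0 < snd z -> tt o z = C -> triangle a b c z) -> 4 * (C^2 - 1) <= C^2.
Definition ArcGood (a b c : ideal) : Prop :=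
  exists v s t1 t2, horo_arc_in a b c v s t1 t2 /\ hlength (horo v s) t1 t2 = 2.
Definition Both a b c := Good a b c /\ ArcGood a b c.

Lemma Both_swap a b c : Both a b c -> Both b a c.
Proof.
  intros [G [v [s [t1 [t2 [[Hv [Hs [Ht Hin]]] Hl]]]]]]. split.
  - intros o C Ho HC H. apply (G o C Ho HC). intros z Hz Hzc. apply tri_swap; auto.
  - exists v, s, t1, t2. split; auto. split; [tauto|]. split; auto. split; auto.
    intros t Ht'. apply tri_swap; auto.
Qed.
Lemma Both_rot a b c : Both a b c -> Both b c a.
Proof.
  intros [G [v [s [t1 [t2 [[Hv [Hs [Ht Hin]]] Hl]]]]]]. split.
  - intros o C Ho HC H. apply (G o C Ho HC). intros z Hz Hzc.
    apply (proj2 (tri_rot a b c z)); auto.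
  - exists v, s, t1, t2. split; auto. split; [tauto|]. split; auto. split; auto.
    intros t Ht'. apply (proj1 (tri_rot a b c _)); auto.
Qed.

Lemma pos_of_prod x k : 0 < k -> 0 <= x * k -> 0 <= x.
Proof. intros. destruct (Rle_or_lt 0 x); auto. nra. Qed.

Lemma core_lt a b : a < b -> Good (Some a) (Some b) None.
Proof.
  intros Hab [ox oy] C Ho HC H. simpl in Ho.
  set (Y := C * oy). set (Rr := oy * sqrt (C^2-1)).
  assert (HK : 0 <= C^2 - 1) by (assert (0 <= (C-1)*(C+1)) by (apply Rmult_le_pos; lra); nra).
  assert (HR0 : 0 <= Rr) by (unfold Rr; apply Rmult_le_pos; [lra| apply sqrt_pos]).
  assert (HR2 : Rr^2 = (C^2-1)*oy^2).
  { unfold Rr. pose proof (sqrt_sqrt _ HK). nra. }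
  assert (HY : 0 < Y) by (unfold Y; nra).
  assert (HYR : Rr < Y).
  { destruct (Rlt_or_le Rr Y); auto. exfalso. assert (Y^2 <= Rr^2) by nra.
    unfold Y in *. nra. }
  assert (H3 : 0 < Y - Rr) by lra.
  assert (T1 : triangle (Some a) (Some b) None (ox - Rr, Y)).
  { apply H. simpl; lra. apply circle_of. simpl; lra. simpl; lra. cbn [fst snd]. unfold Y. rewrite <- HR2. ring. }
  assert (T2 : triangle (Some a) (Some b) None (ox + Rr, Y)).
  { apply H. simpl; lra. apply circle_of. simpl; lra. simpl; lra. cbn [fst snd]. unfold Y. rewrite <- HR2. ring. }
  assert (T3 : triangle (Some a) (Some b) None (ox, Y - Rr)).
  { apply H. simpl; lra. apply circle_of. simpl; lra. simpl; lra. cbn [fst snd]. unfold Y. rewrite <- HR2. ring. }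
  unfold triangle, halfplane in T1, T2, T3; simpl in T1, T2, T3.
  destruct T1 as [_ [[_ A1] _]]. destruct T2 as [[_ A2] _]. destruct T3 as [_ [_ [_ A3]]].
  apply pos_of_prod in A1; [|lra].
  assert (A2' : 0 <= (b - (ox + Rr)) * (b - a)) by nra.
  apply pos_of_prod in A2'; [|lra].
  assert (Hf : 2 * Rr <= Y).
  { destruct (Rle_or_lt (2*Rr) Y) as [h|h]; auto. exfalso.
    set (h0 := (b - a)/2). set (u := ox - (a+b)/2).
    assert (Hu : u^2 <= (h0 - Rr)^2) by (unfold u, h0; nra).
    assert (Hh : Rr <= h0) by (unfold h0; lra).
    assert (E : (Y - Rr)^2 >= h0^2 - u^2) by (unfold u, h0; nra).
    assert ((Y-Rr)^2 < Rr^2) by nra. nra. }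
  assert (4 * Rr^2 <= Y^2) by nra.
  unfold Y in *. rewrite HR2 in *.
  assert (0 < oy^2) by nra. nra.
Qed.

Lemma hspeed_inf s t : 0 < s -> hspeed (horo None s) t = / s.
Proof.
  intros Hs. unfold hspeed, horo. cbn [fst snd].
  change (Derive (fun u : R => u) t) with (Derive id t).
  rewrite Derive_id, Derive_const.
  replace (1 ^ 2 + 0 ^ 2) with 1 by ring. rewrite sqrt_1. field. lra.
Qed.

Lemma hlength_inf s t1 t2 : 0 < s -> hlength (horo None s) t1 t2 = (t2 - t1) / s.
Proof.
  intros Hs. unfold hlength.
  rewrite (RInt_ext _ (fun _ => / s)).
  - rewrite RInt_const. unfold scal; simpl. unfold mult; simpl. field. lra.
  - intros x _. apply hspeed_inf; auto.
Qed.

Lemma hspeed_fin c s t : 0 < s -> hspeed (horo (Some c) s) t = 1.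
Proof.
  intros Hs. unfold hspeed, horo. cbn [fst snd].
  assert (Hd : 0 < 1 + t^2) by (pose proof (pow2_ge_0 t); lra).
  assert (D1 : Derive (fun u : R => c + s * u / (1 + u ^ 2)) t = s*(1-t^2)/(1+t^2)^2).
  { apply is_derive_unique. auto_derive. lra. field. lra. }
  assert (D2 : Derive (fun u : R => s / (1 + u ^ 2)) t = -(2*s*t)/(1+t^2)^2).
  { apply is_derive_unique. auto_derive. lra. field. lra. }
  rewrite D1, D2.
  replace ((s * (1 - t ^ 2) / (1 + t ^ 2) ^ 2) ^ 2 + (- (2 * s * t) / (1 + t ^ 2) ^ 2) ^ 2)
    with ((s / (1 + t^2))^2) by (field; lra).
  rewrite sqrt_pow2. field. split; lra.
  apply Rlt_le, Rdiv_lt_0_compat; lra.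
Qed.

Lemma hlength_fin c s t1 t2 : 0 < s -> hlength (horo (Some c) s) t1 t2 = t2 - t1.
Proof.
  intros Hs. unfold hlength.
  rewrite (RInt_ext _ (fun _ => 1)).
  - rewrite RInt_const. unfold scal; simpl. unfold mult; simpl. ring.
  - intros x _. apply hspeed_fin; auto.
Qed.

Definition InfArc a b := exists s t1 t2,
  horo_arc_in (Some a) (Some b) None None s t1 t2 /\ t2 - t1 = 2 * s.

Lemma infarc_lt a b : a < b -> InfArc a b.
Proof.
  intros Hab. exists ((b-a)/2), a, b. split; [|field].
  split; [right; right; reflexivity|]. split; [lra|]. split; [lra|].
  intros t Ht. unfold triangle, halfplane, horo. cbn [fst snd gfun gval].
  unfold inH; cbn [snd].
  repeat split; try lra.
  - replace ((t - b) * (a - b)) with ((b - t) * (b - a)) by ring. apply Rmult_le_pos; lra.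
  - apply Rmult_le_pos; lra.
  - replace (((t - (a + b) / 2) ^ 2 + ((b - a) / 2) ^ 2 - ((a - b) / 2) ^ 2) * 1)
      with ((t - (a + b) / 2) ^ 2) by field. apply pow2_ge_0.
Qed.

Lemma infarc a b : a <> b -> InfArc a b.
Proof.
  intros Hab. destruct (Rtotal_order a b) as [h|[h|h]]; [apply infarc_lt; auto| contradiction|].
  destruct (infarc_lt b a h) as [s [t1 [t2 [[Hv [Hs [Ht Hin]]] E]]]].
  exists s, t1, t2. split; auto. split; [right; right; reflexivity|]. split; auto. split; auto.
  intros t Ht'. apply tri_swap. auto.
Qed.

Lemma Both_inf a b : a <> b -> Both (Some a) (Some b) None.
Proof.
  intros Hab. split.
  - destruct (Rtotal_order a b) as [h|[h|h]]; [apply core_lt; auto| contradiction|].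
    intros o C Ho HC H. apply (core_lt b a h o C Ho HC). intros z Hz Hzc. apply tri_swap; auto.
  - destruct (infarc a b Hab) as [s [t1 [t2 [Ha E]]]].
    exists None, s, t1, t2. split; auto.
    destruct Ha as [_ [Hs _]]. rewrite hlength_inf; auto. rewrite E. field. lra.
Qed.

Definition gm (c0 : R) (w : pt) : pt :=
  (c0 - fst w / (fst w ^ 2 + snd w ^ 2), snd w / (fst w ^ 2 + snd w ^ 2)).
Definition fm (c0 : R) (z : pt) : pt :=
  (- (fst z - c0) / ((fst z - c0) ^ 2 + snd z ^ 2), snd z / ((fst z - c0) ^ 2 + snd z ^ 2)).

Lemma gm_pos c0 w : 0 < snd w -> 0 < snd (gm c0 w).
Proof.
  intros H. unfold gm; cbn [snd]. apply Rdiv_lt_0_compat; auto.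
  pose proof (pow2_ge_0 (fst w)). assert (0 < snd w ^ 2) by (apply pow_lt; auto). lra.
Qed.

Lemma fm_pos c0 z : 0 < snd z -> 0 < snd (fm c0 z).
Proof.
  intros H. unfold fm; cbn [snd]. apply Rdiv_lt_0_compat; auto.
  pose proof (pow2_ge_0 (fst z - c0)). assert (0 < snd z ^ 2) by (apply pow_lt; auto). lra.
Qed.

Lemma gm_fm c0 z : 0 < snd z -> gm c0 (fm c0 z) = z.
Proof.
  intros H. destruct z as [x y]. cbn [snd] in H.
  assert (HN : 0 < (x - c0)^2 + y^2) by (pose proof (pow2_ge_0 (x - c0)); nra).
  unfold gm, fm; cbn [fst snd]. f_equal; field; lra.
Qed.

Lemma tt_gm c0 w1 w2 : 0 < snd w1 -> 0 < snd w2 -> tt (gm c0 w1) (gm c0 w2) = tt w1 w2.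
Proof.
  intros H1 H2. destruct w1 as [x1 y1], w2 as [x2 y2]. cbn [snd] in H1, H2.
  assert (0 < x1^2 + y1^2) by (pose proof (pow2_ge_0 x1); nra).
  assert (0 < x2^2 + y2^2) by (pose proof (pow2_ge_0 x2); nra).
  unfold tt, gm; cbn [fst snd]. field. repeat split; lra.
Qed.

Lemma sign_iff X Y k : 0 < k -> X = k * Y -> (0 <= X <-> 0 <= Y).
Proof.
  intros Hk ->. split; intro H.
  - apply (pos_of_prod Y k Hk). lra.
  - apply Rmult_le_pos; lra.
Qed.

Lemma sq_pos x : x <> 0 -> 0 < x ^ 2.
Proof. intros H. destruct (Rtotal_order x 0) as [h|[h|h]]; [nra|contradiction|nra]. Qed.

Lemma tri_gm c0 a' b' w : a' <> 0 -> b' <> 0 -> 0 < snd w ->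
  (triangle (Some a') (Some b') None w <->
   triangle (Some (c0 - / a')) (Some (c0 - / b')) (Some c0) (gm c0 w)).
Proof.
  intros Ha Hb Hw. destruct w as [x y]. cbn [snd] in Hw.
  assert (HM : 0 < x^2 + y^2) by (pose proof (pow2_ge_0 x); nra).
  assert (Hk : 0 < / ((a' * b')^2 * (x^2 + y^2))).
  { apply Rinv_0_lt_compat. apply Rmult_lt_0_compat; auto.
    apply sq_pos. apply Rmult_integral_contrapositive; auto. }
  set (k := / ((a' * b')^2 * (x^2 + y^2))) in Hk.
  assert (HH : inH (x, y) <-> inH (gm c0 (x, y))).
  { unfold inH. split; intro; [apply gm_pos|]; cbn [snd]; auto. }
  unfold triangle, halfplane.
  rewrite <- HH.
  rewrite (sign_iff (gfun (Some (c0 - / b')) (Some c0) (gm c0 (x, y)) * gval (Some (c0 - / b')) (Some c0) (Some (c0 - / a')))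
            (gfun (Some b') None (x, y) * gval (Some b') None (Some a')) k Hk).
  2: { unfold k, gfun, gval, gm; cbn [fst snd]. field. repeat split; auto; lra. }
  rewrite (sign_iff (gfun (Some c0) (Some (c0 - / a')) (gm c0 (x, y)) * gval (Some c0) (Some (c0 - / a')) (Some (c0 - / b')))
            (gfun None (Some a') (x, y) * gval None (Some a') (Some b')) k Hk).
  2: { unfold k, gfun, gval, gm; cbn [fst snd]. field. repeat split; auto; lra. }
  rewrite (sign_iff (gfun (Some (c0 - / a')) (Some (c0 - / b')) (gm c0 (x, y)) * gval (Some (c0 - / a')) (Some (c0 - / b')) (Some c0))
            (gfun (Some a') (Some b') (x, y) * gval (Some a') (Some b') None) k Hk).
  2: { unfold k, gfun, gval, gm; cbn [fst snd]. field. repeat split; auto; lra. }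
  tauto.
Qed.

Lemma Both_mob c0 a' b' : a' <> 0 -> b' <> 0 -> a' <> b' ->
  Both (Some (c0 - / a')) (Some (c0 - / b')) (Some c0).
Proof.
  intros Ha Hb Hab. split.
  - intros o C Ho HC H.
    apply (proj1 (Both_inf a' b' Hab) (fm c0 o) C (fm_pos c0 o Ho) HC).
    intros w Hw Hwc. apply (tri_gm c0 a' b' w Ha Hb Hw). apply H.
    + apply gm_pos; auto.
    + replace (tt o (gm c0 w)) with (tt (gm c0 (fm c0 o)) (gm c0 w)) by (rewrite gm_fm; auto).
      rewrite tt_gm; auto. apply fm_pos; auto.
  - destruct (infarc a' b' Hab) as [s [t1 [t2 [[_ [Hs [Ht Hin]]] E]]]].
    exists (Some c0), (/ s), (- t2 / s), (- t1 / s). split.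
    + split; [right; right; reflexivity|]. split; [apply Rinv_0_lt_compat; auto|].
      split.
      { unfold Rdiv. apply Rmult_le_compat_r; [left; apply Rinv_0_lt_compat; auto| lra]. }
      intros u Hu.
      assert (Eh : horo (Some c0) (/ s) u = gm c0 (horo None s (- s * u))).
      { assert (0 < 1 + u^2) by (pose proof (pow2_ge_0 u); lra).
        assert (0 < (- s * u)^2 + s^2) by (pose proof (pow2_ge_0 (-s*u)); nra).
        unfold horo, gm; cbn [fst snd]. f_equal; field; repeat split; lra. }
      rewrite Eh. apply (tri_gm c0 a' b' _ Ha Hb); [cbn [horo snd]; auto|].
      apply Hin.
      destruct Hu as [Hu1 Hu2].
      apply (Rmult_le_compat_l s) in Hu1; [|lra].
      apply (Rmult_le_compat_l s) in Hu2; [|lra].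
      replace (s * (- t2 / s)) with (- t2) in Hu1 by (field; lra).
      replace (s * (- t1 / s)) with (- t1) in Hu2 by (field; lra).
      lra.
    + rewrite hlength_fin; [|apply Rinv_0_lt_compat; auto].
      replace (- t1 / s - - t2 / s) with ((t2 - t1) / s) by (field; lra).
      rewrite E. field. lra.
Qed.

Lemma key a b c : ideal_triangle a b c -> Both a b c.
Proof.
  intros [H1 [H2 H3]].
  destruct a as [a0|], b as [b0|], c as [c0|]; try congruence.
  - assert (a0 <> c0) by congruence. assert (b0 <> c0) by congruence.
    assert (a0 <> b0) by congruence.
    assert (Ha : / (c0 - a0) <> 0) by (apply Rinv_neq_0_compat; lra).
    assert (Hb : / (c0 - b0) <> 0) by (apply Rinv_neq_0_compat; lra).
    assert (Hab : / (c0 - a0) <> / (c0 - b0)).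
    { intro E. apply (f_equal Rinv) in E. rewrite !Rinv_inv in E. lra. }
    pose proof (Both_mob c0 _ _ Ha Hb Hab) as B.
    rewrite !Rinv_inv in B. replace (c0 - (c0 - a0)) with a0 in B by ring.
    replace (c0 - (c0 - b0)) with b0 in B by ring. exact B.
  - apply Both_inf. congruence.
  - apply Both_rot. apply Both_inf. congruence.
  - apply Both_rot, Both_rot. apply Both_inf. congruence.
Qed.

Theorem lemma4p2 (a b c : ideal) (o : pt) (rho : R) (p q r : pt) (h0 : R) :
  ideal_triangle a b c ->
  inscribed a b c o rho ->
  touches o rho b c p -> touches o rho c a q -> touches o rho a b r ->
  (exists v s t1 t2, horo_arc_in a b c v s t1 t2 /\ hlength (horo v s) t1 t2 = h0) ->
  (forall v s t1 t2, horo_arc_in a b c v s t1 t2 -> hlength (horo v s) t1 t2 <= h0) ->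
  hdist p q < h0.
Proof.
  intros HT [Ho [Hrho Hin]] [[Hp Hpd] _] [[Hq Hqd] _] _ _ Hmax.
  unfold inH in Ho, Hp, Hq.
  set (C := tt o p).
  assert (HC : 1 <= C) by (apply tt_ge1; auto).
  assert (HqC : tt o q = C).
  { apply arcosh_inj; [apply tt_ge1; auto| auto|].
    rewrite <- !hdist_tt. unfold C. rewrite <- hdist_tt. congruence. }
  destruct (key a b c HT) as [G [v [s [t1 [t2 [Harc Hl]]]]]].
  assert (H2 : 2 <= h0) by (rewrite <- Hl; apply Hmax; auto).
  assert (HB : 4 * (C^2 - 1) <= C^2).
  { apply (G o C Ho HC). intros z Hz Hzc. apply Hin. split; [exact Hz|].
    rewrite hdist_tt, Hzc. unfold C. rewrite <- hdist_tt. exact Hpd. }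
  pose proof (circle_eq o p C Ho Hp eq_refl) as Ep.
  pose proof (circle_eq o q C Ho Hq HqC) as Eq.
  destruct o as [ox oy], p as [px py], q as [qx qy]. cbn [fst snd] in *.
  set (Y := C * oy) in *.
  set (K := (C^2-1) * oy^2) in *.
  assert (HY : 0 < Y) by (unfold Y; nra).
  assert (HK : 4 * K <= Y^2).
  { unfold K, Y. replace ((C * oy)^2) with (C^2 * oy^2) by ring.
    rewrite <- Rmult_assoc. apply Rmult_le_compat_r; [apply pow2_ge_0| lra]. }
  assert (Hpy : Y / 2 <= py).
  { destruct (Rle_or_lt (Y/2) py) as [h|h]; auto. exfalso.
    assert (h1 : Y/2 < Y - py) by lra.
    assert (h2 : (Y/2)*(Y/2) < (Y - py)*(Y - py)) by (apply Rmult_le_0_lt_compat; lra).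
    pose proof (pow2_ge_0 (px - ox)). 
    replace ((py - Y)^2) with ((Y - py)*(Y - py)) in Ep by ring. nra. }
  assert (Hqy : Y / 2 <= qy).
  { destruct (Rle_or_lt (Y/2) qy) as [h|h]; auto. exfalso.
    assert (h1 : Y/2 < Y - qy) by lra.
    assert (h2 : (Y/2)*(Y/2) < (Y - qy)*(Y - qy)) by (apply Rmult_le_0_lt_compat; lra).
    pose proof (pow2_ge_0 (qx - ox)). 
    replace ((qy - Y)^2) with ((Y - qy)*(Y - qy)) in Eq by ring. nra. }
  assert (Hd : (px - qx)^2 + (py - qy)^2 <= 4 * py * qy).
  { assert ((px - qx)^2 + (py - qy)^2 <= 2 * ((px - ox)^2 + (qx - ox)^2) + 2 * ((py - Y)^2 + (qy - Y)^2))
      by (pose proof (pow2_ge_0 (px + qx - 2*ox)); pose proof (pow2_ge_0 (py + qy - 2*Y)); nra).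
    assert (Y^2 <= 4 * py * qy).
    { replace (4 * py * qy) with ((2*py)*(2*qy)) by ring. replace (Y^2) with (Y*Y) by ring.
      apply Rmult_le_compat; lra. }
    lra. }
  assert (Htt : tt (px, py) (qx, qy) <= 3).
  { unfold tt; cbn [fst snd].
    assert (((px - qx) ^ 2 + (py - qy) ^ 2) / (2 * py * qy) <= 2).
    { apply Rmult_le_reg_r with (2 * py * qy); [nra|].
      unfold Rdiv. rewrite Rmult_assoc, Rinv_l; nra. }
    lra. }
  rewrite hdist_tt.
  apply Rle_lt_trans with (arcosh 3).
  - apply arcosh_le; auto. apply tt_ge1; auto.
  - pose proof arcosh3; lra.
Qed.
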